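(* (1) $\mathcal{K}^{\mathsf{TS}}(K_1)=\{k:k\ge1\}$, $\mathcal{K}^{\mathsf{TS}}(K_2)=\{1\}$, and $\mathcal{K}^{\mathsf{TS}}(K_n)=\{1,n-1\}$ for $n\ge3$. (2) $\mathcal{K}^{\mathsf{TS}}(P_n)=\{1\}$ for $n\ge2$; $\mathcal{K}^{\mathsf{TS}}(C_n)=\{1\}$ for $n\ge4$; $\mathcal{K}^{\mathsf{TS}}(K_{m,n})=\{1\}$ for all $m,n\ge1$. (3) $\mathcal{K}^{\mathsf{TS}}(B_1)=\{1,2\}$ and $\mathcal{K}^{\mathsf{TS}}(B_p)=\{1\}$ for $p\ge2$. (4) $\mathcal{K}^{\mathsf{TS}}(F_p)=\{1,2\}$ for every $p\ge1$.
   Context: All graphs are finite, simple, undirected. A $k$-clique of a graph $H$ is a set of $k$ pairwise adjacent vertices. For a graph $H$ and integer $k\ge1$, the Token Sliding graph $\mathsf{TS}_k(H)$ has as vertices the $k$-cliques of $H$, and two $k$-cliques $A,B$ are adjacent iff $A\setminus B=\{u\}$, $B\setminus A=\{v\}$ for some vertices $u,v$ with $uv\in E(H)$. For a graph $G$, $\mathcal{K}^{\mathsf{TS}}(G)=\{k\ge1:\ \exists H,\ \mathsf{TS}_k(H)\cong G\}$. $K_n$, $P_n$, $C_n$ denote the complete graph, path, cycle on $n$ vertices; $K_{m,n}$ the complete bipartite graph. The book graph $B_p$ ($p\ge1$) consists of $p$ triangles sharing a common edge; the friendship graph $F_p$ ($p\ge1$) consists of $p$ triangles sharing a common vertex (and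 otherwise disjoint). *)

(* Defs.v *)
From mathcomp Require Import all_boot.
Set Implicit Arguments. Unset Strict Implicit. Unset Printing Implicit Defensive.

Definition simple_graph (T : finType) (e : rel T) : Prop :=
  symmetric e /\ irreflexive e.

Definition is_kclique (T : finType) (e : rel T) (k : nat) (A : {set T}) : bool :=
  (#|A| == k) && [forall x in A, forall y in A, (x != y) ==> e x y].

Definition kclique (T : finType) (e : rel T) (k : nat) :=
  {A : {set T} | is_kclique e k A}.

Definition ts_adj (T : finType) (e : rel T) (k : nat) : rel (kclique e k) :=
  fun A B => [exists u, exists v,
    [&& (val A :\: val B == [set u]), (val B :\: val A == [set v]) & e u v]].

Definition graph_iso (V W : finType) (eV : rel V) (eW : rel W) : Prop :=
  exists f : V -> W, bijective f /\ forall x y, eW (f x) (f y) = eV x y.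

Definition KTS (V : finType) (eG : rel V) (k : nat) : Prop :=
  1 <= k /\ exists (T : finType) (eH : rel T),
    simple_graph eH /\ graph_iso eG (@ts_adj T eH k).

Unset Implicit Arguments.
Definition Kn (n : nat) : rel 'I_n := fun x y => x != y.
Definition Pn (n : nat) : rel 'I_n := fun x y => (x.+1 == y :> nat) || (y.+1 == x :> nat).
Definition Cn (n : nat) : rel 'I_n :=
  fun x y => (x != y) && ((x.+1 %% n == y) || (y.+1 %% n == x)).
Definition Kmn (m n : nat) : rel ('I_m + 'I_n) :=
  fun x y => match x, y with inl _, inr _ | inr _, inl _ => true | _, _ => false end.
(* Book graph B_p: spine vertices 0,1; pages 2..p+1 adjacent to both 0 and 1. *)
Definition Bp (p : nat) : rel 'I_(p.+2) :=
  fun x y => (x != y) && ((x < 2) || (y < 2)).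
(* Friendship graph F_p: centre 0; triangles {0, 2i+1, 2i+2}, i < p. *)
Definition Fp (p : nat) : rel 'I_(p.*2.+1) :=
  fun x y => (x != y) && [|| x == 0 :> nat, y == 0 :> nat | (x.-1)./2 == (y.-1)./2].

(* Main.v *)
Require Import Defs.
From mathcomp Require Import all_boot.
From mathcomp Require Import zify.
Set Implicit Arguments. Unset Strict Implicit. Unset Printing Implicit Defensive.


Section Gen.
Variables (T : finType) (e : rel T).

Definition tsb (A B : {set T}) : bool :=
  [exists u, exists v, [&& (A :\: B == [set u]), (B :\: A == [set v]) & e u v]].

Lemma ts_adjE k (P Q : kclique e k) : ts_adj P Q = tsb (val P) (val Q).
Proof. by []. Qed.

Definition clq (X : {set T}) := forall x y, x \in X -> y \in X -> x != y -> e x y.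

Lemma kcliqueP k (A : {set T}) : is_kclique e k A <-> #|A| = k /\ clq A.
Proof.
split.
- case/andP=> /eqP HA /forall_inP H; split=> // x y Hx Hy Hxy.
  by move: (H x Hx) => /forall_inP /(_ y Hy) /implyP /(_ Hxy).
- case=> HA H; apply/andP; split; first by rewrite HA.
  apply/forall_inP => x Hx; apply/forall_inP => y Hy; apply/implyP; exact: H.
Qed.

Lemma diff1 (A B : {set T}) u x : A :\: B == [set u] -> (x \in A) && (x \notin B) = (x == u).
Proof. move=> /eqP /setP /(_ x); rewrite !inE => <-; by rewrite andbC. Qed.

Lemma tsb_two (A B : {set T}) a b : tsb A B -> a \in A -> a \notin B -> b \in A -> b \notin B -> a = b.
Proof.
case/existsP=> u /existsP [v /and3P [H1 _ _]] aA aB bA bB.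
have /eqP -> : a == u by rewrite -(diff1 a H1) aA aB.
by have /eqP -> : b == u by rewrite -(diff1 b H1) bA bB.
Qed.

Lemma tsbAA (A : {set T}) : tsb A A = false.
Proof.
apply/negbTE/negP; case/existsP=> u /existsP [v /and3P [H1 _ _]].
by have := diff1 u H1; rewrite eqxx andbN.
Qed.

Lemma adj_sub (D X : {set T}) y x : tsb D X -> y \in D -> y \notin X -> x \in D -> x != y -> x \in X.
Proof.
move=> H yD yX xD xy; apply/negPn/negP => xX.
by move: xy; rewrite (tsb_two H xD xX yD yX) eqxx.
Qed.

Lemma tsb_e (A B : {set T}) a b : tsb A B -> a \in A -> a \notin B -> b \in B -> b \notin A -> e a b.
Proof.
case/existsP=> u /existsP [v /and3P [H1 H2 H3]] aA aB bB bA.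
have /eqP -> : a == u by rewrite -(diff1 a H1) aA aB.
by have /eqP -> : b == v by rewrite -(diff1 b H2) bA bB.
Qed.

Lemma tsbI (A B : {set T}) a b : A :\: B == [set a] -> B :\: A == [set b] -> e a b -> tsb A B.
Proof. by move=> H1 H2 H3; apply/existsP; exists a; apply/existsP; exists b; rewrite H1 H2 H3. Qed.

Lemma del_adj (C : {set T}) z1 z2 : clq C -> z1 \in C -> z2 \in C -> z1 != z2 -> tsb (C :\ z1) (C :\ z2).
Proof.
move=> HC H1 H2 H12; apply: (@tsbI _ _ z2 z1).
- apply/eqP/setP => x; rewrite !inE.
  case: (eqVneq x z2) => [->|Hx] /=; first by rewrite eq_sym H12 H2.
  by case: (x \in C); rewrite ?andbF ?andbT.
- apply/eqP/setP => x; rewrite !inE.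
  case: (eqVneq x z1) => [->|Hx] /=; first by rewrite H12 H1.
  by case: (x \in C); rewrite ?andbF ?andbT.
- by apply: HC => //; rewrite eq_sym.
Qed.

Lemma del_kclique k (C : {set T}) z : clq C -> #|C| = k.+1 -> z \in C -> is_kclique e k (C :\ z).
Proof.
move=> HC cC zC; apply/kcliqueP; split.
- by move: (cardsD1 z C); rewrite cC zC add1n => -[].
- move=> x y; rewrite !inE => /andP[_ Hx] /andP[_ Hy]; exact: HC.
Qed.

Lemma pick_avoid (X : {set T}) (s : seq T) : size s < #|X| -> exists2 w, w \in X & w \notin s.
Proof.
move=> H; case: (boolP [exists x in X, x \notin s]) => [/exists_inP //|/exists_inPn Hn].
have : #|X| <= #|s|.
  apply: subset_leq_card; apply/subsetP => x xX; by move: (Hn x xX); rewrite negbK.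
by move: (card_size s); lia.
Qed.

Lemma sub_del k (C D : {set T}) : #|C| = k.+1 -> #|D| = k -> D \subset C -> exists2 z, z \in C & D = C :\ z.
Proof.
move=> cC cD sDC.
have : 0 < #|C :\: D| by rewrite cardsD (setIidPr sDC) cC cD subSnn.
case/card_gt0P => z; rewrite inE => /andP [zD zC]; exists z => //.
apply/eqP; rewrite eqEcard; apply/andP; split.
- apply/subsetP => x xD; rewrite !inE (subsetP sDC x xD) andbT.
  by apply/eqP => E; move: zD; rewrite -E xD.
- by move: (cardsD1 z C); rewrite cC zC cD add1n => -[<-].
Qed.

End Gen.


Section Gen2.
Variables (T : finType) (e : rel T).
Hypothesis esym : symmetric e.

Lemma edge_clq k (P Q : kclique e k) : ts_adj P Q -> exists u v (C : {set T}),
  [/\ clq e C, #|C| = k.+1, u \in C & v \in C] /\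
  [/\ u != v, val P = C :\ v & val Q = C :\ u].
Proof.
case: P Q => A HA [B HB]; rewrite ts_adjE /=.
case/existsP=> u /existsP [v /and3P [H1 H2 Huv]].
move/kcliqueP: HA => [cA clA]; move/kcliqueP: HB => [cB clB].
have /andP [uA uB] : (u \in A) && (u \notin B) by rewrite (diff1 u H1).
have /andP [vB vA] : (v \in B) && (v \notin A) by rewrite (diff1 v H2).
have ev : forall z, z \in A -> e v z.
  move=> z zA; case zB: (z \in B).
  - apply: clB => //; apply/eqP => E; by move: vA; rewrite E zA.
  - have /eqP -> : z == u by rewrite -(diff1 z H1) zA zB.
    by rewrite esym.
exists u, v, (v |: A); split; split.
- move=> x y; rewrite !inE => Hx Hy Hxy.
  case/orP: Hx => [/eqP Ex|Hx]; case/orP: Hy => [/eqP Ey|Hy].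
  + by move: Hxy; rewrite Ex Ey eqxx.
  + rewrite Ex; exact: ev.
  + rewrite Ey esym; exact: ev.
  + exact: clA.
- by rewrite cardsU1 vA cA.
- by rewrite !inE uA orbT.
- by rewrite !inE eqxx.
- by apply/eqP => E; move: vA; rewrite -E uA.
- apply/setP=> x; rewrite !inE.
  by case: (eqVneq x v) => [->|] /=; [rewrite (negbTE vA)|].
- apply/setP=> x; rewrite !inE.
  case: (eqVneq x u) => [->|Hxu] /=; first by rewrite (negbTE uB).
  case: (eqVneq x v) => [->|Hxv] /=; first by rewrite vB.
  case xA: (x \in A); case xB: (x \in B) => //.
  + by have := diff1 x H1; rewrite xA xB (negbTE Hxu).
  + by have := diff1 x H2; rewrite xA xB (negbTE Hxv).
Qed.

Lemma ex_del k (C : {set T}) z : clq e C -> #|C| = k.+1 -> z \in C ->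
  exists R : kclique e k, val R = C :\ z.
Proof. move=> HC cC zC; by exists (exist (fun A => is_kclique e k A) _ (del_kclique HC cC zC)). Qed.

Lemma tri k (P Q : kclique e k) : 2 <= k -> ts_adj P Q ->
  exists R : kclique e k, ts_adj P R /\ ts_adj Q R.
Proof.
move=> k2 /edge_clq [u [v [C [[clC cC uC vC] [uv EP EQ]]]]].
have [w wC] : exists2 w, w \in C & w \notin [:: u; v].
  by apply: pick_avoid; rewrite cC /=.
rewrite !inE negb_or => /andP [wu wv].
have [R ER] := ex_del clC cC wC.
exists R; rewrite !ts_adjE ER EP EQ; split; apply: del_adj => //; by rewrite eq_sym.
Qed.

Lemma k4 k (P Q : kclique e k) : 3 <= k -> ts_adj P Q ->
  exists R S : kclique e k, [/\ ts_adj P R, ts_adj Q R, ts_adj P S, ts_adj Q S & ts_adj R S].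
Proof.
move=> k3 /edge_clq [u [v [C [[clC cC uC vC] [uv EP EQ]]]]].
have [w wC] : exists2 w, w \in C & w \notin [:: u; v].
  by apply: pick_avoid; rewrite cC /=; move: k3; clear; lia.
rewrite !inE negb_or => /andP [wu wv].
have [w' w'C] : exists2 w', w' \in C & w' \notin [:: u; v; w].
  by apply: pick_avoid; rewrite cC /=; move: k3; clear; lia.
rewrite !inE !negb_or => /and3P [w'u w'v w'w].
have [R ER] := ex_del clC cC wC.
have [S ES] := ex_del clC cC w'C.
exists R, S; rewrite !ts_adjE ER ES EP EQ; split; apply: del_adj => //; by rewrite eq_sym.
Qed.


End Gen2.


Section Gen3.
Variables (T : finType) (e : rel T).
Hypothesis esym : symmetric e.

Lemma complete_card k (P0 Q0 : kclique e k) : 2 <= k -> P0 != Q0 ->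
  (forall P Q : kclique e k, P != Q -> ts_adj P Q) -> #|{: kclique e k}| = k.+1.
Proof.
move=> k2 PQ0 Hc.
have [u [v [C [[clC cC uC vC] [uv EP EQ]]]]] := edge_clq esym (Hc _ _ PQ0).
have sub : forall D : kclique e k, val D \subset C.
  move=> D; apply/subsetP => y yD; apply/negPn/negP => yC.
  have /kcliqueP [cD clD] := valP D.
  have [z1 z1C _] : exists2 z, z \in C & z \notin [::] by apply: pick_avoid; rewrite cC.
  have [z2 z2C] : exists2 z, z \in C & z \notin [:: z1] by apply: pick_avoid; rewrite cC /=; move: k2; clear; lia.
  rewrite inE => z21.
  have [z3 z3C] : exists2 z, z \in C & z \notin [:: z1; z2] by apply: pick_avoid; rewrite cC /=; move: k2; clear; lia.
  rewrite !inE negb_or => /andP [z31 z32].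
  have inz : forall z, z \in C -> forall x, x \in val D -> x != y -> x \in C :\ z.
    move=> z zC x xD xy; have [R ER] := ex_del clC cC zC.
    have yR : y \notin val R by rewrite ER !inE (negbTE yC) andbF.
    have DR : D != R by apply/eqP => E; move: yR; rewrite -E yD.
    have := Hc _ _ DR; rewrite ts_adjE => H.
    by rewrite -ER; apply: (adj_sub H yD).
  have : val D :\ y \subset C :\ z1 :\ z2 :\ z3.
    apply/subsetP => x; rewrite !inE => /andP [xy xD].
    have := inz _ z1C x xD xy; have := inz _ z2C x xD xy; have := inz _ z3C x xD xy.
    rewrite !inE => /andP [-> ->] /andP [-> _] /andP [-> _]; done.
  move/subset_leq_card => Hle.
  have c1 := cardsD1 z1 C. have c2 := cardsD1 z2 (C :\ z1).
  have c3 := cardsD1 z3 (C :\ z1 :\ z2). have cy : #|val D| = (#|val D :\ y|).+1 by rewrite (cardsD1 y) yD.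
  rewrite z1C /= in c1. rewrite !inE z21 z2C /= in c2. rewrite !inE z31 z32 z3C /= in c3.
  rewrite c1 c2 c3 in cC; rewrite cy in cD.
  move: Hle cC cD k2; generalize #|C :\ z1 :\ z2 :\ z3| #|val D :\ y|; clear; lia.
have ex : forall D : kclique e k, exists z, (z \in C) && (val D == C :\ z).
  move=> D; have /kcliqueP [cD _] := valP D.
  have [z zC Ez] := sub_del cC cD (sub D). by exists z; rewrite zC Ez eqxx.
pose h D := xchoose (ex D).
have hP D : (h D \in C) && (val D == C :\ h D) := xchooseP (ex D).
have hinj : injective h.
  move=> D1 D2 E; apply: val_inj.
  have /andP [_ /eqP ->] := hP D1. have /andP [_ /eqP ->] := hP D2. by rewrite E.
have le1 : #|{: kclique e k}| <= #|C|.
  apply: (@leq_trans #|[set h D | D in [set: kclique e k]]|).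
    by rewrite card_imset // cardsT.
  apply: subset_leq_card; apply/subsetP => z /imsetP [D _ ->]; by case/andP: (hP D).
have le2 : #|C| <= #|{: kclique e k}|.
  pose g z := insubd P0 (C :\ z).
  have gv z : z \in C -> val (g z) = C :\ z.
    move=> zC; rewrite /g insubdK //; exact: del_kclique.
  have ginj : {in C &, injective g}.
    move=> z1 z2 z1C z2C E; have := congr1 val E; rewrite !gv // => E'.
    apply/eqP/negPn/negP => ne.
    have : z1 \in C :\ z2 by rewrite !inE ne z1C.
    by rewrite -E' !inE eqxx.
  rewrite -(card_in_imset ginj); exact: max_card.
by apply/eqP; rewrite eqn_leq -cC le1 le2.
Qed.


Lemma diamond k (P Q R S : kclique e k) : 2 <= k -> ts_adj P Q -> ts_adj R P -> ts_adj R Q ->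
  ts_adj S P -> ts_adj S Q -> ~~ ts_adj R S -> R != S ->
  (forall X : kclique e k, X != P -> ts_adj X Q -> ts_adj X P) -> False.
Proof.
move=> k2 PQ RP RQ SP SQ nRS RS Hq.
have [u [v [C [[clC cC uC vC] [uv EP EQ]]]]] := edge_clq esym PQ.
have inC : forall X : kclique e k, ts_adj X P -> ts_adj X Q -> val X \subset C.
  move=> X XP XQ; apply/subsetP => y yX; apply/negPn/negP => yC.
  have /kcliqueP [cX clX] := valP X.
  rewrite ts_adjE in XP XQ.
  have yP : y \notin val P by rewrite EP !inE (negbTE yC) andbF.
  have yQ : y \notin val Q by rewrite EQ !inE (negbTE yC) andbF.
  have XinP x : x \in val X -> x != y -> x \in val P.
    by move=> xX xy; apply: (adj_sub XP yX yP xX xy).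
  have XinQ x : x \in val X -> x != y -> x \in val Q.
    by move=> xX xy; apply: (adj_sub XQ yX yQ xX xy).
  have sCX : C :\ u :\ v \subset val X.
    have : val X :\ y == C :\ u :\ v.
      rewrite eqEcard; apply/andP; split.
      - apply/subsetP => x; rewrite !inE => /andP [xy xX].
        have := XinP x xX xy; have := XinQ x xX xy.
        rewrite EP EQ !inE => /andP [xu xC] /andP [xv _]; by rewrite xu xv xC.
      - have c1 : #|C| = (#|C :\ u|).+1 by rewrite (cardsD1 u) uC.
        have c2 : #|C :\ u| = (#|C :\ u :\ v|).+1 by rewrite (cardsD1 v) !inE eq_sym uv vC.
        have cy : #|val X| = (#|val X :\ y|).+1 by rewrite (cardsD1 y) yX.
        rewrite c1 c2 in cC; rewrite cy in cX.
        move: cC cX; generalize #|C :\ u :\ v| #|val X :\ y|; clear; lia.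
    move/eqP => E; apply/subsetP => x xC; have : x \in val X :\ y by rewrite E.
    by rewrite inE => /andP [].
  have yu : y != u by apply/eqP => E; move: yC; rewrite E uC.
  have yv : y != v by apply/eqP => E; move: yC; rewrite E vC.
  have ey : forall c, c \in C -> e y c.
    move=> c cC'.
    case: (eqVneq c u) => [->|cu].
      apply: (tsb_e XP yX yP); first by rewrite EP !inE uv uC.
      apply/negP => uX; have := XinQ u uX; rewrite eq_sym yu EQ !inE eqxx.
      by move/(_ isT).
    case: (eqVneq c v) => [->|cv].
      apply: (tsb_e XQ yX yQ); first by rewrite EQ !inE eq_sym uv vC.
      apply/negP => vX; have := XinP v vX; rewrite eq_sym yv EP !inE eqxx.
      by move/(_ isT).
    apply: clX => //; first by apply: (subsetP sCX); rewrite !inE cu cv cC'.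
    by apply/eqP => E; move: yC; rewrite E cC'.
  have clD : clq e ((y |: C) :\ u).
    move=> a b; rewrite !inE => /andP [_ /orP [/eqP->|aC]] /andP [_ /orP [/eqP->|bC]] ab.
    - by rewrite eqxx in ab.
    - by apply: ey.
    - by rewrite esym; apply: ey.
    - by apply: clC.
  have cD : #|(y |: C) :\ u| = k.+1.
    have := cardsD1 u (y |: C); rewrite cardsU1 yC cC !inE uC orbT /=.
    by move=> [].
  have [w wC] : exists2 w, w \in C & w \notin [:: u; v].
    by apply: pick_avoid; rewrite cC.
  rewrite !inE negb_or => /andP [wu wv].
  have wD : w \in (y |: C) :\ u by rewrite !inE wu wC orbT.
  have yD : y \in (y |: C) :\ u by rewrite !inE eqxx yu.
  have [TT ET] := ex_del clD cD wD.
  have TQ : ts_adj TT Q.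
    rewrite ts_adjE ET.
    have -> : val Q = ((y |: C) :\ u) :\ y.
      rewrite EQ; apply/setP => x; rewrite !inE.
      by case: (eqVneq x y) => [->|xy] /=; [rewrite (negbTE yC) andbF|].
    apply: del_adj => //; by apply/eqP => E; move: yC; rewrite -E wC.
  have yw : y != w by apply/eqP => E; move: yC; rewrite E wC.
  have TP : TT != P by apply/eqP => E; move: yP; rewrite -E ET !inE eqxx yu yw.
  have := Hq _ TP TQ; rewrite ts_adjE => H.
  have vT : v \in val TT by rewrite ET !inE (eq_sym v w) wv (eq_sym v u) uv vC orbT.
  have yT : y \in val TT by rewrite ET !inE eqxx yu yw.
  have := adj_sub H yT yP vT; rewrite eq_sym yv EP !inE eqxx.
  by move/(_ isT).
have sR := inC R RP RQ. have sS := inC S SP SQ.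
have /kcliqueP [cR _] := valP R. have /kcliqueP [cS _] := valP S.
have [zR zRC ER] := sub_del cC cR sR. have [zS zSC ES] := sub_del cC cS sS.
have zRS : zR != zS by apply/eqP => E; move: RS; rewrite -val_eqE ER ES E eqxx.
by move: nRS; rewrite ts_adjE ER ES (del_adj clC zRC zSC zRS).
Qed.

End Gen3.


Lemma iso_unpack (V T : finType) (eG : rel V) (eH : rel T) k :
  graph_iso eG (@ts_adj _ eH k) -> exists (f : V -> kclique eH k) (g : kclique eH k -> V),
  [/\ cancel f g, cancel g f & forall x y, ts_adj (f x) (f y) = eG x y].
Proof. by case=> f [[g fg gf] Hf]; exists f, g. Qed.

Lemma KTS_tri (V : finType) (eG : rel V) k a b : 2 <= k -> eG a b ->
  (forall x y z, eG x y -> eG y z -> eG x z -> False) -> KTS eG k -> False.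
Proof.
move=> k2 ab Ht [_ [T [eH [[sym irr] /iso_unpack [f [g [fg gf Hf]]]]]]].
have : ts_adj (f a) (f b) by rewrite Hf.
case/(tri sym k2) => R [H1 H2].
by apply: (Ht a b (g R)) => //; rewrite -Hf gf.
Qed.

Lemma KTS_K4 (V : finType) (eG : rel V) k a b : 3 <= k -> eG a b ->
  (forall x y z w, eG x y -> eG x z -> eG x w -> eG y z -> eG y w -> eG z w -> False) ->
  KTS eG k -> False.
Proof.
move=> k3 ab Ht [_ [T [eH [[sym irr] /iso_unpack [f [g [fg gf Hf]]]]]]].
have : ts_adj (f a) (f b) by rewrite Hf.
case/(k4 sym k3) => R [S [H1 H2 H3 H4 H5]].
by apply: (Ht a b (g R) (g S)) => //; rewrite -Hf !gf.
Qed.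

Lemma KTS_complete (V : finType) (eG : rel V) k (a b : V) :
  (forall x y : V, eG x y = (x != y)) -> a != b -> 2 <= k -> KTS eG k -> #|V| = k.+1.
Proof.
move=> eGE ab k2 [_ [T [eH [[sym irr] [f [fb Hf]]]]]].
rewrite (bij_eq_card fb).
have fab : f a != f b by apply/eqP => /(bij_inj fb) E; by rewrite E eqxx in ab.
apply: (complete_card sym k2 fab).
case: fb => g fg gf.
move=> P Q PQ; rewrite -(gf P) -(gf Q) Hf eGE.
by apply/eqP => E; move: PQ; rewrite -(gf P) -(gf Q) E eqxx.
Qed.

Lemma KTS_diamond (V : finType) (eG : rel V) k a b c d : 2 <= k -> eG a b ->
  eG c a -> eG c b -> eG d a -> eG d b -> ~~ eG c d -> c != d ->
  (forall x, x != a -> eG x b -> eG x a) -> KTS eG k -> False.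
Proof.
move=> k2 ab ca cb da db ncd cd Hx [_ [T [eH [[sym irr] [f [fb Hf]]]]]].
have fcd : f c != f d by apply/eqP => /(bij_inj fb) E; by rewrite E eqxx in cd.
case: fb => g fg gf.
apply: (diamond sym k2 (P := f a) (Q := f b) (R := f c) (S := f d)); rewrite ?Hf //.
move=> X XP XQ; rewrite -(gf X) Hf; rewrite -(gf X) Hf in XQ.
apply: Hx => //; apply/eqP => E; by move: XP; rewrite -(gf X) E eqxx.
Qed.

Lemma bij_of (A B : finType) (f : A -> B) : injective f -> (forall y, exists x, f x = y) -> bijective f.
Proof.
move=> fi fs; have ex y : exists x, f x == y by case: (fs y) => x <-; exists x.
exists (fun y => xchoose (ex y)) => [x|y]; last exact/eqP/(xchooseP (ex y)).
apply: fi; exact/eqP/(xchooseP (ex (f x))).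
Qed.

Lemma KTS1 (V : finType) (eG : rel V) : simple_graph eG -> KTS eG 1.
Proof.
move=> [sym irr]; split=> //; exists V, eG; split=> //.
have one x : is_kclique eG 1 [set x].
  apply/kcliqueP; split; first exact: cards1.
  by move=> a b; rewrite !inE => /eqP -> /eqP ->; rewrite eqxx.
exists (fun x => exist (fun A => is_kclique eG 1 A) [set x] (one x)); split.
  apply: bij_of.
  - by move=> x y /(congr1 val) /= /set1_inj.
  - move=> [A HA]; have /kcliqueP [cA _] := HA.
    have /cards1P [x Ex] : #|A| == 1 by rewrite cA.
    by exists x; apply: val_inj => /=; rewrite Ex.
move=> x y; rewrite ts_adjE /=; apply/idP/idP.
- case/existsP=> u /existsP [v /and3P [H1 H2 H3]].
  have := diff1 u H1; rewrite eqxx !inE => /andP [/eqP Eu _].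
  have := diff1 v H2; rewrite eqxx !inE => /andP [/eqP Ev _].
  by rewrite -Eu -Ev.
- move=> Hxy.
  have xy : x != y by apply/eqP => E; move: Hxy; rewrite E irr.
  have yx : y != x by rewrite eq_sym.
  apply: (tsbI (a := x) (b := y)) => //; apply/eqP/setP => z; rewrite !inE.
  + by case: (eqVneq z x) => [->|]; rewrite ?xy ?andbF.
  + by case: (eqVneq z y) => [->|]; rewrite ?yx ?andbF.
Qed.

Lemma KTS_ext (V : finType) (e1 e2 : rel V) k : e1 =2 e2 -> KTS e1 k -> KTS e2 k.
Proof.
move=> E [k1 [T [eH [sg [f [fb Hf]]]]]]; split=> //; exists T, eH; split=> //.
by exists f; split=> // x y; rewrite Hf.
Qed.

Lemma iso_sym (V W : finType) (e1 : rel V) (e2 : rel W) : graph_iso e1 e2 -> graph_iso e2 e1.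
Proof.
case=> f [[g fg gf] Hf]; exists g; split; first by exists f.
by move=> x y; rewrite -Hf !gf.
Qed.

Lemma iso_trans (U V W : finType) (e1 : rel U) (e2 : rel V) (e3 : rel W) :
  graph_iso e1 e2 -> graph_iso e2 e3 -> graph_iso e1 e3.
Proof.
case=> f [fb Hf] [h [hb Hh]]; exists (h \o f); split; first exact: bij_comp.
by move=> x y /=; rewrite Hh Hf.
Qed.

Lemma KTS_Kn1 k : 1 <= k -> KTS (Kn 1) k.
Proof.
move=> k1; split=> //; exists 'I_k, (Kn k); split.
  by split; [move=> x y; rewrite /Kn eq_sym | move=> x; rewrite /Kn eqxx].
have HT : is_kclique (Kn k) k [set: 'I_k].
  by apply/kcliqueP; split; [rewrite cardsT card_ord | move=> a b _ _].
exists (fun _ => exist (fun A => is_kclique (Kn k) k A) _ HT); split.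
  exists (fun _ => ord0) => [x|P]; first by rewrite (ord1 x).
  apply: val_inj => /=; have /kcliqueP [cP _] := valP P.
  by apply/esym/eqP; rewrite eqEcard subsetT cardsT card_ord cP leqnn.
by move=> x y; rewrite (ord1 x) (ord1 y) ts_adjE tsbAA /Kn eqxx.
Qed.

Lemma KTS_Kn_top n : 2 <= n -> KTS (Kn n) (n - 1).
Proof.
move=> n2; split; first by lia.
exists 'I_n, (Kn n); split.
  by split; [move=> x y; rewrite /Kn eq_sym | move=> x; rewrite /Kn eqxx].
have HC x : is_kclique (Kn n) (n - 1) (~: [set x]).
  by apply/kcliqueP; split; [rewrite cardsC1 card_ord subn1 | move=> a b _ _].
exists (fun x => exist (fun A => is_kclique (Kn n) (n - 1) A) _ (HC x)); split.
  apply: bij_of.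
  - by move=> x y /(congr1 val) /= /setC_inj /set1_inj.
  - move=> [A HA]; have /kcliqueP [cA _] := HA.
    have : #|~: A| == 1.
      have := cardsC A; rewrite cA card_ord => H; apply/eqP.
      move: H n2; generalize #|~: A|; clear; lia.
    case/cards1P => x Ex; exists x; apply: val_inj => /=; by rewrite -Ex setCK.
move=> x y; rewrite ts_adjE /= /Kn.
case: (eqVneq x y) => [->|xy]; first by rewrite tsbAA.
have yx : y != x by rewrite eq_sym.
apply: (tsbI (a := y) (b := x)); last by rewrite /Kn yx.
- apply/eqP/setP => z; rewrite !inE.
  by case: (eqVneq z y) => [->|]; rewrite ?yx ?andbF.
- apply/eqP/setP => z; rewrite !inE.
  by case: (eqVneq z x) => [->|]; rewrite ?xy ?andbF.
Qed.


Section Two.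
Variables (T : finType) (e : rel T).
Hypothesis esym : symmetric e.
Hypothesis eirr : irreflexive e.

Lemma kcl2 a b : e a b -> is_kclique e 2 [set a; b].
Proof.
move=> ab; have nab : a != b by apply/eqP => E; move: ab; rewrite E eirr.
apply/kcliqueP; split; first by rewrite cards2 nab.
move=> x y; rewrite !inE => /orP [/eqP->|/eqP->] /orP [/eqP->|/eqP->];
  rewrite ?eqxx // => _; by rewrite esym.
Qed.

Lemma setD2 (a b c : T) : a != b -> b != c -> [set a; b] :\: [set a; c] == [set b].
Proof.
move=> ab bc; apply/eqP/setP => z; rewrite !inE.
case: (eqVneq z a) => [->|za] /=; first by rewrite (negbTE ab).
by case: (eqVneq z b) => [->|zb] /=; rewrite ?(negbTE bc) ?andbF.
Qed.

Lemma tsb_share a b c : a != b -> a != c -> b != c -> tsb e [set a; b] [set a; c] = e b c.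
Proof.
move=> ab ac bc; apply/idP/idP.
- move=> H; apply: (tsb_e H); rewrite !inE ?eqxx ?orbT //.
  + by rewrite negb_or eq_sym ab bc.
  + by rewrite negb_or eq_sym ac eq_sym bc.
- move=> H; apply: (tsbI (a := b) (b := c)) => //; apply: setD2 => //.
  by rewrite eq_sym.
Qed.

Lemma tsb_disj a b c d : a != c -> a != d -> b != c -> b != d -> a != b ->
  tsb e [set a; b] [set c; d] = false.
Proof.
move=> ac ad bc bd ab; apply/negbTE/negP => H.
have := tsb_two H (a := a) (b := b).
rewrite !inE !eqxx orbT !negb_or ac ad bc bd /= => /(_ isT isT isT isT) E.
by rewrite E eqxx in ab.
Qed.

End Two.

Section Fp.
Variable p : nat.

Definition eH' : rel (bool + 'I_p) := fun x y =>
  match x, y with inl a, inl b => a != b | inl _, inr _ => true | inr _, inl _ => true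
  | inr _, inr _ => false end.
Definition eF : rel (option (bool * 'I_p)) := fun x y =>
  match x, y with None, None => false | None, Some _ => true | Some _, None => true
  | Some (a, i), Some (b, j) => (i == j) && (a != b) end.

Lemma sH' : simple_graph eH'.
Proof.
split; first by move=> [a|i] [b|j] //=; rewrite eq_sym.
by move=> [a|i] /=; rewrite ?eqxx.
Qed.

Definition phi (o : option (bool * 'I_p)) : {set bool + 'I_p} :=
  match o with None => [set inl false; inl true] | Some (b, i) => [set inl b; inr i] end.

Lemma phiK o : is_kclique eH' 2 (phi o).
Proof.
case: sH' => sym irr.
by case: o => [[b i]|]; apply: kcl2.
Qed.

Lemma iso_phi : graph_iso eF (@ts_adj _ eH' 2).
Proof.
case: sH' => sym irr.
exists (fun o => exist (fun A => is_kclique eH' 2 A) _ (phiK o)); split.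
  apply: bij_of.
  - move=> x y /(congr1 val) /= E.
    have mem (z : bool + 'I_p) := congr1 (fun A : {set bool + 'I_p} => z \in A) E.
    case: x y E mem => [[a i]|] [[b j]|] //= E mem.
    + have := mem (inl a); have := mem (inr i); rewrite !inE /= !eqxx /=.
      by move=> /esym /eqP [->] /esym /orP [/eqP [->] //|/eqP].
    + have := mem (inr i); rewrite !inE /= !eqxx /=.
      by move/esym/eqP.
    + have := mem (inr j); rewrite !inE /= !eqxx /=.
      by move/eqP.
  - move=> [A HA]; have /kcliqueP [cA clA] := HA.
    have /cards2P [x [y [xy Exy]]] : #|A| == 2 by rewrite cA.
    have exy : eH' x y by apply: clA; rewrite // Exy !inE eqxx ?orbT.
    case: x y xy exy Exy => [a|i] [b|j] //= xy exy Exy.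
    + exists None; apply: val_inj => /=; rewrite Exy.
      by case: a b xy {exy Exy} => -[] //= _; rewrite setUC.
    + by exists (Some (a, j)); apply: val_inj => /=; rewrite Exy.
    + by exists (Some (b, i)); apply: val_inj => /=; rewrite Exy setUC.
move=> x y; rewrite ts_adjE /=.
case: x y => [[a i]|] [[b j]|] /=.
- case: (eqVneq i j) => [<-|ij]; case: (eqVneq a b) => [<-|ab] /=.
  + by rewrite tsbAA.
  + rewrite [[set inl a; inr i]]setUC [[set inl b; inr i]]setUC tsb_share //.
  + by rewrite tsb_share.
  + by rewrite tsb_disj //= ?andbF.
- have -> : [set inl false; inl true] = [set @inl bool 'I_p a; inl (~~ a)] :> {set _}.
    by case: a => //; rewrite setUC.
  by rewrite tsb_share //; case: a.
- have -> : [set inl false; inl true] = [set @inl bool 'I_p b; inl (~~ b)] :> {set _}.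
    by case: b => //; rewrite setUC.
  by rewrite tsb_share //; case: b.
- by rewrite tsbAA.
Qed.

End Fp.


Section Psi.
Variable p : nat.

Definition psi (o : option (bool * 'I_p)) : 'I_(p.*2.+1) :=
  match o with None => ord0 | Some (b, i) => inord (b + i.*2).+1 end.

Lemma psiv b i : val (psi (Some (b, i))) = (b + (nat_of_ord i).*2).+1.
Proof. rewrite /= inordK //; move: (ltn_ord i); case: b; lia. Qed.

Lemma iso_psi : graph_iso (@eF p) (Fp p).
Proof.
exists psi; split.
  apply: bij_of.
  - move=> [[a i]|] [[b j]|] /eqP; rewrite -val_eqE ?psiv //=.
    rewrite eqSS => /eqP E.
    have ij : nat_of_ord i = j by case: a E; case: b; lia.
    have ab : a = b by case: a E; case: b => //= E; lia.
    by rewrite ab (val_inj ij).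
  - move=> x; case: (eqVneq (val x) 0) => [x0|x0].
      by exists None; apply: val_inj; rewrite x0.
    have x0' : nat_of_ord x != 0 := x0.
    have hi : (x.-1)./2 < p by move: (ltn_ord x) x0'; clear; lia.
    exists (Some (odd x.-1, Ordinal hi)); apply: val_inj; rewrite psiv /=.
    by rewrite odd_double_half prednK // lt0n.
move=> [[a i]|] [[b j]|]; rewrite /Fp -val_eqE ?psiv //=.
rewrite !half_bit_double eqSS.
case: (eqVneq i j) => [<-|ij]; rewrite ?andbT ?andbF.
- by rewrite eqxx andbT eqn_add2r; case: a; case: b.
- by rewrite val_eqE (negbTE ij) andbF.
Qed.

Lemma KTS_Fp2 : KTS (Fp p) 2.
Proof.
split=> //; exists _, (@eH' p); split; first exact: sH'.
exact: iso_trans (iso_sym iso_psi) (@iso_phi p).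
Qed.

End Psi.


Lemma ordE n (x y : 'I_n) : (x == y) = (nat_of_ord x == nat_of_ord y).
Proof. by rewrite -val_eqE. Qed.

Lemma sKn n : simple_graph (Kn n).
Proof. by split; [move=> x y; rewrite /Kn eq_sym | move=> x; rewrite /Kn eqxx]. Qed.

Lemma sPn n : simple_graph (Pn n).
Proof. split; [move=> x y; rewrite /Pn orbC // | move=> x; rewrite /Pn; lia]. Qed.

Lemma sCn n : simple_graph (Cn n).
Proof. by split; [move=> x y; rewrite /Cn eq_sym orbC | move=> x; rewrite /Cn eqxx]. Qed.

Lemma sKmn m n : simple_graph (Kmn m n).
Proof. by split; [move=> [x|x] [y|y] | move=> [x|x]]. Qed.

Lemma sBp p : simple_graph (Bp p).
Proof. by split; [move=> x y; rewrite /Bp eq_sym orbC | move=> x; rewrite /Bp eqxx]. Qed.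

Lemma sFp p : simple_graph (Fp p).
Proof.
split; last by move=> x; rewrite /Fp eqxx.
move=> x y; rewrite /Fp eq_sym; congr (_ && _).
by rewrite orbA (orbC (_ == 0)) -orbA (eq_sym ((y.-1)./2)).
Qed.

Lemma triKn2 (x y z : 'I_2) : Kn 2 x y -> Kn 2 y z -> Kn 2 x z -> False.
Proof. rewrite /Kn !ordE; move: (ltn_ord x) (ltn_ord y) (ltn_ord z); lia. Qed.

Lemma triPn n (x y z : 'I_n) : Pn n x y -> Pn n y z -> Pn n x z -> False.
Proof. rewrite /Pn; lia. Qed.

Lemma modS_eq n (x y : 'I_n) :
  (x.+1 %% n == y) = ((x.+1 == y) || ((x.+1 == n) && (nat_of_ord y == 0))).
Proof.
move: (ltn_ord x) (ltn_ord y) => Hx Hy.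
case: (ltnP x.+1 n) => H; first by rewrite modn_small //; lia.
have -> : x.+1 = n by lia.
rewrite modnn; lia.
Qed.

Lemma triCn n (x y z : 'I_n) : 4 <= n -> Cn n x y -> Cn n y z -> Cn n x z -> False.
Proof.
rewrite /Cn !modS_eq !ordE; move: (ltn_ord x) (ltn_ord y) (ltn_ord z); lia.
Qed.

Lemma triKmn m n (x y z : 'I_m + 'I_n) : Kmn m n x y -> Kmn m n y z -> Kmn m n x z -> False.
Proof. by case: x; case: y; case: z. Qed.

Lemma natK4 (x y z w : nat) :
  (x != y) && [|| x == 0, y == 0 | (x.-1)./2 == (y.-1)./2] ->
  (x != z) && [|| x == 0, z == 0 | (x.-1)./2 == (z.-1)./2] ->
  (x != w) && [|| x == 0, w == 0 | (x.-1)./2 == (w.-1)./2] ->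
  (y != z) && [|| y == 0, z == 0 | (y.-1)./2 == (z.-1)./2] ->
  (y != w) && [|| y == 0, w == 0 | (y.-1)./2 == (w.-1)./2] ->
  (z != w) && [|| z == 0, w == 0 | (z.-1)./2 == (w.-1)./2] -> False.
Proof.
case: (eqVneq x 0) => [->|x0]; case: (eqVneq y 0) => [->|y0];
case: (eqVneq z 0) => [->|z0]; case: (eqVneq w 0) => [->|w0] /=; lia.
Qed.

Lemma K4Fp p (x y z w : 'I_(p.*2.+1)) : Fp p x y -> Fp p x z -> Fp p x w ->
  Fp p y z -> Fp p y w -> Fp p z w -> False.
Proof. rewrite /Fp !ordE; exact: natK4. Qed.

Lemma Bp1E : Bp 1 =2 Kn 3.
Proof.
move=> x y; rewrite /Bp /Kn; case: (eqVneq x y) => //= xy; move: xy; rewrite ordE.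
move: (ltn_ord x) (ltn_ord y); lia.
Qed.


Lemma partKn n : 3 <= n -> forall k, KTS (Kn n) k <-> k = 1 \/ k = n - 1.
Proof.
move=> n3 k; split.
- move=> H; have [k1 _] := H; case: (ltnP k 2) => k2; first by left; lia.
  have h0 : 0 < n by lia. have h1 : 1 < n by lia.
  have := KTS_complete (a := Ordinal h0) (b := Ordinal h1) (fun x y => erefl) isT k2 H.
  rewrite card_ord => ->; right; lia.
- case=> ->; [exact: KTS1 (sKn n) | apply: KTS_Kn_top; lia].
Qed.

Lemma BpE p (x y : 'I_p.+2) : Bp p x y = (nat_of_ord x != y) && ((x < 2) || (y < 2)).
Proof. by rewrite /Bp ordE. Qed.

Lemma partBp p : 2 <= p -> forall k, KTS (Bp p) k <-> k = 1.
Proof.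
move=> p2 k; split; last by move=> ->; exact: KTS1 (sBp p).
move=> H; have [k1 _] := H; case: (ltnP k 2) => k2; first by lia.
exfalso.
have h1 : 1 < p.+2 by lia. have h2 : 2 < p.+2 by lia. have h3 : 3 < p.+2 by lia.
apply: (KTS_diamond (a := ord0) (b := inord 1) (c := inord 2) (d := inord 3) k2 _ _ _ _ _ _ _ _ H);
  rewrite ?BpE ?ordE ?(inordK h1) ?(inordK h2) ?(inordK h3) //.
move=> x; rewrite !BpE ordE (inordK h1) /=; lia.
Qed.

Lemma partFp p : 1 <= p -> forall k, KTS (Fp p) k <-> k = 1 \/ k = 2.
Proof.
move=> p1 k; split; last by case=> ->; [exact: KTS1 (sFp p) | exact: KTS_Fp2].
move=> H; have [k1 _] := H; case: (ltnP k 3) => k3; first by lia.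
exfalso.
have h1 : 1 < p.*2.+1 by lia.
apply: (KTS_K4 (a := ord0) (b := inord 1) k3 _ (@K4Fp p) H).
by rewrite /Fp ordE (inordK h1).
Qed.

Theorem theorem3p3 :
  (* (1) complete graphs *)
  (forall k, KTS (Kn 1) k <-> 1 <= k) /\
  (forall k, KTS (Kn 2) k <-> k = 1) /\
  (forall n, 3 <= n -> forall k, KTS (Kn n) k <-> k = 1 \/ k = n - 1) /\
  (* (2) paths, cycles, complete bipartite graphs *)
  (forall n, 2 <= n -> forall k, KTS (Pn n) k <-> k = 1) /\
  (forall n, 4 <= n -> forall k, KTS (Cn n) k <-> k = 1) /\
  (forall m n, 1 <= m -> 1 <= n -> forall k, KTS (Kmn m n) k <-> k = 1) /\
  (* (3) book graphs *)
  (forall k, KTS (Bp 1) k <-> k = 1 \/ k = 2) /\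
  (forall p, 2 <= p -> forall k, KTS (Bp p) k <-> k = 1) /\
  (* (4) friendship graphs *)
  (forall p, 1 <= p -> forall k, KTS (Fp p) k <-> k = 1 \/ k = 2).
Proof.
split; first by move=> k; split; [case | exact: KTS_Kn1].
split.
  move=> k; split; last by move=> ->; exact: KTS1 (sKn 2).
  move=> H; have [k1 _] := H; case: (ltnP k 2) => k2; first by lia.
  exfalso; apply: (KTS_tri (a := ord0) (b := ord_max) k2 _ (@triKn2) H).
  by rewrite /Kn ordE.
split; first exact: partKn.
split.
  move=> n n2 k; split; last by move=> ->; exact: KTS1 (sPn n).
  move=> H; have [k1 _] := H; case: (ltnP k 2) => k2; first by lia.
  have h0 : 0 < n by lia. have h1 : 1 < n by lia.
  exfalso; apply: (KTS_tri (a := Ordinal h0) (b := Ordinal h1) k2 _ (@triPn n) H).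
  by rewrite /Pn.
split.
  move=> n n4 k; split; last by move=> ->; exact: KTS1 (sCn n).
  move=> H; have [k1 _] := H; case: (ltnP k 2) => k2; first by lia.
  have h0 : 0 < n by lia. have h1 : 1 < n by lia.
  exfalso; apply: (KTS_tri (a := Ordinal h0) (b := Ordinal h1) k2 _ _ H).
    by rewrite /Cn modS_eq ordE /=; lia.
  by move=> x y z; apply: triCn.
split.
  move=> m n m1 n1 k; split; last by move=> ->; exact: KTS1 (sKmn m n).
  move=> H; have [k1 _] := H; case: (ltnP k 2) => k2; first by lia.
  exfalso; apply: (KTS_tri (a := inl (Ordinal m1)) (b := inr (Ordinal n1)) k2 _ (@triKmn m n) H).
  by [].
split.
  move=> k; rewrite -(partKn (n := 3)) //; split.
  - by apply: KTS_ext => x y; rewrite Bp1E.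
  - by apply: KTS_ext => x y; rewrite Bp1E.
split; first exact: partBp.
exact: partFp.
Qed.
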